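(* Let $C$ be a normal, closed cone with nonempty interior in a real Banach space and let $u\in\operatorname{int} C$. Then the map $f(x)=x+u$ is $\tau$-condensing on $\operatorname{int} C$.
   Context: A closed cone $C$ (closed convex, $\lambda C\subseteq C$ for $\lambda\ge0$, $C\cap(-C)=\{0\}$) induces the order $x\le y$ iff $y-x\in C$. $C$ is normal if there is $\kappa$ with $\|x\|\le\kappa\|y\|$ whenever $0\le x\le y$. Thompson's metric on $\operatorname{int}C$: $d_T(x,y)=\log\inf\{\beta\ge1:\beta^{-1}x\le y\le\beta x\}$. For a $d_T$-bounded set $A\subseteq\operatorname{int}C$, $\tau(A)=\inf\{d>0: A$ has a finite cover by sets of $d_T$-diameter $\le d\}$. A continuous map $f:D\to\operatorname{int}C$ ($D\subseteq \operatorname{int}C$) is $\tau$-condensing if $\tau(f(A))<\tau(A)$ for every $d_T$-bounded $A\subseteq D$ with $\tau(A)>0$. *)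

(* Defs.v *)
From HB Require Import structures.
From mathcomp Require Import all_boot all_order all_algebra.
From mathcomp Require Import all_classical all_reals all_analysis.
Set Implicit Arguments. Unset Strict Implicit. Unset Printing Implicit Defensive.
Import Order.TTheory GRing.Theory Num.Theory.
Import numFieldNormedType.Exports.
Local Open Scope classical_set_scope.
Local Open Scope ring_scope.

Section Cones.
Context {R : realType} {V : normedModType R}.

Definition is_closed_cone (C : set V) : Prop :=
  closed C /\
  (forall x y (t : R), C x -> C y -> 0 <= t -> t <= 1 ->
       C (t *: x + (1 - t) *: y)) /\
  (forall (l : R) x, 0 <= l -> C x -> C (l *: x)) /\
  (forall x, C x -> C (- x) -> x = 0).

Definition cle (C : set V) (x y : V) : Prop := C (y - x).

Definition normal_cone (C : set V) : Prop :=
  exists kappa : R, forall x y, cle C 0 x -> cle C x y -> `|x| <= kappa * `|y|.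

Definition thompson (C : set V) (x y : V) : R :=
  ln (inf [set b : R | 1 <= b /\ cle C (b^-1 *: x) y /\ cle C y (b *: x)]).

Definition dT_bounded (C : set V) (A : set V) : Prop :=
  A `<=` interior C /\
  exists M : R, forall x y, A x -> A y -> thompson C x y <= M.

Definition dT_diam_le (C : set V) (S : set V) (d : R) : Prop :=
  forall x y, S x -> S y -> thompson C x y <= d.

Definition tau (C : set V) (A : set V) : R :=
  inf [set d : R | 0 < d /\
     exists (n : nat) (S : nat -> set V),
       (forall i, (i < n)%N -> dT_diam_le C (S i) d) /\
       (forall a, A a -> exists2 i, (i < n)%N & S i a)].

Definition tau_condensing (C : set V) (D : set V) (f : V -> V) : Prop :=
  (forall x, D x -> interior C (f x)) /\
  (forall x, D x -> forall e : R, 0 < e -> exists2 delta : R, 0 < delta &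
      forall y, D y -> thompson C x y < delta -> thompson C (f x) (f y) < e) /\
  (forall A, A `<=` D -> dT_bounded C A -> 0 < tau C A ->
      tau C (f @` A) < tau C A).

End Cones.

(* Main.v *)
Require Import Defs.
From HB Require Import structures.
From mathcomp Require Import all_boot all_order all_algebra.
From mathcomp Require Import all_classical all_reals all_analysis.
From mathcomp Require Import lra ring.
Import Order.TTheory GRing.Theory Num.Theory.
Import numFieldNormedType.Exports.
Local Open Scope classical_set_scope.
Local Open Scope ring_scope.

Lemma zmod_id5 (W : zmodType) (p q r s w : W) : w + r - (q + s) = p - q + (r - s - (p - w)).
Proof.
by rewrite opprB opprD !addrA [RHS](ACl (1*6*5*3*2*4)) /= addrN add0r.
Qed.

Section H.
Context {R : realType} {V : normedModType R} (C : set V) (hC : is_closed_cone C).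

Lemma Cscale l x : 0 <= l -> C x -> C (l *: x).
Proof. by case: hC => _ [_ [h _]]; apply: h. Qed.

Lemma Cadd x y : C x -> C y -> C (x + y).
Proof.
case: hC => _ [hcv [hs _]] Cx Cy.
have h := hcv x y (2^-1) Cx Cy.
have H2 : C ((2^-1) *: x + (1 - 2^-1) *: y) by apply: h; rewrite ?invr_ge0 ?invf_le1 ?ler1n //; lra.
have := hs 2 _ _ H2; rewrite ler0n => /(_ isT).
have -> : (1 - 2^-1 : R) = 2^-1 by field.
by rewrite -scalerDr scalerA divff ?pnatr_eq0 // scale1r.
Qed.

Lemma int_sub x : interior C x -> C x.
Proof. exact: interior_subset. Qed.

Lemma int_ball x : interior C x -> exists2 r : R, 0 < r & forall z, `|x - z| < r -> C z.
Proof.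
move=> /nbhs_ballP [r r0 hr]; exists r => // z hz; apply: hr.
by rewrite -ball_normE /ball_ /=.
Qed.

Lemma int_dom x y : interior C x -> exists2 b : R, 1 <= b & C (b *: x - y).
Proof.
move=> hx; have Cx := @int_sub x hx.
have [r r0 hr] := @int_ball x hx.
set t := r / (2 * (`|y| + 1)).
have t0 : 0 < t by rewrite /t divr_gt0 // mulr_gt0 // ltr_pwDr.
have Cz : C (x - t *: y).
  apply: hr; rewrite opprB addrC subrK normrZ gtr0_norm //.
  rewrite /t mulrC mulrA ltr_pdivrMr ?mulr_gt0 ?ltr_pwDr //.
  have : `|y| < 2 * (`|y| + 1) by have := normr_ge0 y; lra.
  move=> h; rewrite mulrC ltr_pM2l //.
exists (Num.max 1 t^-1); first by rewrite le_max lexx.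
have -> : Num.max 1 t^-1 *: x - y = (Num.max 1 t^-1 - t^-1) *: x + t^-1 *: (x - t *: y).
  by rewrite scalerBr scalerA mulVf ?gt_eqF // scale1r scalerBl addrA subrK.
apply: Cadd; apply: Cscale => //.
- by rewrite subr_ge0 le_max lexx orbT.
- by rewrite invr_ge0 ltW.
Qed.


Definition TS (x y : V) := [set b : R | 1 <= b /\ cle C (b^-1 *: x) y /\ cle C y (b *: x)].

Lemma TS_ne x y : interior C x -> interior C y -> TS x y !=set0.
Proof.
move=> hx hy.
have [b1 b11 h1] := @int_dom x y hx.
have [b2 b21 h2] := @int_dom y x hy.
have Cx := @int_sub x hx; have Cy := @int_sub y hy.
have b0 : 0 < Num.max b1 b2 by rewrite lt_max; apply/orP; left; lra.
exists (Num.max b1 b2); split; first by rewrite le_max b11.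
rewrite /cle; split.
- have -> : y - (Num.max b1 b2)^-1 *: x = (Num.max b1 b2)^-1 *: ((Num.max b1 b2 - b2) *: y + (b2 *: y - x)).
    by rewrite addrA -scalerDl subrK scalerBr scalerA mulVf ?gt_eqF // scale1r.
  apply: Cscale; first by rewrite invr_ge0 ltW.
  by apply: Cadd => //; apply: Cscale => //; rewrite subr_ge0 le_max lexx orbT.
- have -> : Num.max b1 b2 *: x - y = (Num.max b1 b2 - b1) *: x + (b1 *: x - y).
    by rewrite addrA scalerBl subrK.
  by apply: Cadd => //; apply: Cscale => //; rewrite subr_ge0 le_max lexx.
Qed.

Lemma TS_lb x y : lbound (TS x y) 1.
Proof. by move=> b [].
Qed.

Lemma th_le x y b : TS x y b -> thompson C x y <= ln b.
Proof.
move=> hb; rewrite /thompson.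
have i1 : 1 <= inf (TS x y) by apply: lb_le_inf; [exists b | exact: TS_lb].
have ib : inf (TS x y) <= b by apply: ge_inf => //; exists 1; exact: TS_lb.
rewrite ler_ln // posrE; lra.
Qed.

Lemma th_lt x y B : interior C x -> interior C y -> 0 < B -> thompson C x y < ln B ->
  exists2 b, TS x y b & b < B.
Proof.
move=> hx hy B0 h; apply: inf_lt; first exact: TS_ne.
have i1 : 1 <= inf (TS x y) by apply: lb_le_inf; [exact: TS_ne | exact: TS_lb].
by move: h; rewrite /thompson ltr_ln // posrE; lra.
Qed.


Definition gam (b c : R) := (1 + b * c) / (1 + c).

Lemma gam_step b c x y u : 1 <= b -> 0 < c -> C (b *: x - y) -> C (c *: u - x) ->
  C (gam b c *: (x + u) - (y + u)).
Proof.
move=> b1 c0 h1 h2.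
have e1 : (b - gam b c) * c = gam b c - 1 by rewrite /gam; field; lra.
have -> : gam b c *: (x + u) - (y + u) = (b *: x - y) + (b - gam b c) *: (c *: u - x).
  rewrite scalerBr scalerA e1 !scalerBl !scale1r scalerDr; exact: zmod_id5.
apply: Cadd => //; apply: Cscale => //.
rewrite /gam subr_ge0 ler_pdivrMr; last lra.
nra.
Qed.


Lemma up_dom b c u x : C u -> C (b *: u - x) -> b <= c -> C (c *: u - x).
Proof.
move=> Cu h bc.
have -> : c *: u - x = (c - b) *: u + (b *: u - x) by rewrite addrA scalerBl subrK.
by apply: Cadd => //; apply: Cscale => //; rewrite subr_ge0.
Qed.

Lemma TS_f b c x y u : 0 < c -> C (c *: u - x) -> C (c *: u - y) -> TS x y b ->
  TS (x + u) (y + u) (gam b c).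
Proof.
move=> c0 hx hy [b1 [h1 h2]]; rewrite /cle in h1 h2.
have b0 : 0 < b by lra.
have g1 : 1 <= gam b c by rewrite /gam ler_pdivlMr ?mul1r; [nra | lra].
split => //; rewrite /cle; split; last exact: gam_step.
have h3 : C (b *: y - x).
  have -> : b *: y - x = b *: (y - b^-1 *: x) by rewrite scalerBr scalerA divff ?gt_eqF // scale1r.
  by apply: Cscale => //; rewrite ltW.
have := @gam_step b c y x u b1 c0 h3 hy.
have -> : y + u - (gam b c)^-1 *: (x + u) = (gam b c)^-1 *: (gam b c *: (y + u) - (x + u)).
  rewrite scalerBr scalerA mulVf ?scale1r //; rewrite gt_eqF //; lra.
by move=> h; apply: Cscale => //; rewrite invr_ge0; lra.
Qed.

Lemma gam_mono b B c : 0 < c -> b <= B -> gam b c <= gam B c.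
Proof. by move=> c0 bB; rewrite /gam ler_pM2r ?invr_gt0; [nra | lra]. Qed.

Lemma int_add x u : interior C x -> interior C u -> interior C (x + u).
Proof.
move=> hx hu; have Cx := @int_sub x hx.
have [r r0 hr] := @int_ball u hu.
apply/nbhs_ballP; exists r => // z; rewrite -ball_normE /ball_ /= => hz.
have -> : z = x + (z - x) by rewrite addrC subrK.
apply: Cadd => //; apply: hr.
by rewrite opprB addrA (addrC u).
Qed.

End H.

Theorem lemma2p4 (R : realType) (V : completeNormedModType R) (C : set V)
  (hC : is_closed_cone C) (hN : normal_cone C) (hint : interior C !=set0)
  (u : V) (hu : interior C u) :
  tau_condensing C (interior C) (fun x => x + u).
Proof.
have Cu := interior_subset hu.
have dom2 : forall x y : V, interior C x -> interior C y ->
    exists2 c : R, 0 < c & C (c *: u - x) /\ C (c *: u - y).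
  move=> x y _ _.
  have [b1 b11 h1] := int_dom C hC u x hu.
  have [b2 b21 h2] := int_dom C hC u y hu.
  exists (Num.max b1 b2); first by rewrite lt_max; apply/orP; left; lra.
  split; apply: (up_dom C hC _ _ _ _ Cu); [exact: h1 | | exact: h2 |];
    by rewrite le_max lexx ?orbT.
split; first by move=> x hx; exact: (int_add C hC).
split.
  move=> x hx e e0; exists e => // y hy h.
  have [b hb hbe] : exists2 b, TS C x y b & b < expR e.
    by apply: (th_lt C hC _ _ _ hx hy (expR_gt0 e)); rewrite expRK.
  have [c c0 [hcx hcy]] := dom2 x y hx hy.
  have hf := TS_f C hC _ _ _ _ _ c0 hcx hcy hb.
  have b1 : 1 <= b by case: hb.
  have bc : c <= b * c by rewrite ler_peMl //; lra.
  apply: (le_lt_trans (th_le _ _ _ _ hf)).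
  apply: (@le_lt_trans _ _ (ln b)).
    rewrite ler_ln ?posrE; last lra.
      by rewrite /gam ler_pdivrMr; [nra | lra].
    by rewrite /gam divr_gt0; lra.
  by rewrite -[X in _ < X](expRK e) ltr_ln ?posrE ?expR_gt0 //; lra.
move=> A hAD [hAi [M hM]] htau.
set t := tau C A in htau *.
have [a0 Aa0] : exists a, A a.
  apply: contrapT => nA.
  have : t <= t / 2.
    apply: ge_inf.
      by exists 0 => d [d0 _]; exact: ltW.
    split; first by rewrite divr_gt0.
    exists 0%N, (fun _ => set0); split => // a Aa.
    by exfalso; apply: nA; exists a.
  lra.
have [K K1 hK] := int_dom C hC u a0 hu.
set B := expR M + 1.
have B0 : 0 < B by rewrite /B; have := expR_gt0 M; lra.
set c := B * K.
have c0 : 0 < c by rewrite /c mulr_gt0 //; lra.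
have hc : forall y, A y -> C (c *: u - y).
  move=> y Ay.
  have [b hb hbB] : exists2 b, TS C a0 y b & b < B.
    apply: (th_lt C hC _ _ _ (hAi _ Aa0) (hAi _ Ay) B0).
    apply: (le_lt_trans (hM _ _ Aa0 Ay)).
    by rewrite -[X in X < _](expRK M) ltr_ln ?posrE ?expR_gt0 // /B; lra.
  case: hb => b1 [_ hb2]; rewrite /cle in hb2.
  have h3 : C ((b * K) *: u - y).
    have -> : (b * K) *: u - y = b *: (K *: u - a0) + (b *: a0 - y).
      by rewrite scalerBr scalerA addrA subrK.
    by apply: Cadd => //; apply: Cscale => //; lra.
  apply: (up_dom C hC _ _ _ _ Cu h3).
  by rewrite /c ler_pM2r; lra.
set E := expR t.
have E1 : 1 < E by rewrite /E expR_gt1.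
set k := (E - 1) / (2 * c).
have k0 : 0 < k by rewrite /k divr_gt0 ?mulr_gt0 //; lra.
have hk : k * c = (E - 1) / 2 by rewrite /k; field; lra.
set B' := E + k.
have B'0 : 0 < B' by rewrite /B'; lra.
have tB : t < ln B'.
  by rewrite -[X in X < _](expRK t) ltr_ln ?posrE ?expR_gt0 // /B' -/E; lra.
have TA0 : [set d : R | 0 < d /\ exists (n : nat) (S : nat -> set V),
       (forall i, (i < n)%N -> dT_diam_le C (S i) d) /\
       (forall a, A a -> exists2 i, (i < n)%N & S i a)] !=set0.
  apply: contrapT => h0; move: htau; rewrite /t /tau.
  suff -> : [set d : R | 0 < d /\ exists (n : nat) (S : nat -> set V),
       (forall i, (i < n)%N -> dT_diam_le C (S i) d) /\
       (forall a, A a -> exists2 i, (i < n)%N & S i a)] = set0 by rewrite inf0 ltxx.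
  by apply/seteqP; split => // d hd; apply: h0; exists d.
have [d [d0 [n [S [hS hcov]]]] hdB] := inf_lt TA0 tB.
have g1 : 1 < gam B' c.
  rewrite /gam ltr_pdivlMr ?mul1r; last lra.
  have : 1 < B' by rewrite /B'; lra.
  by move=> h; nra.
apply: (@le_lt_trans _ _ (ln (gam B' c))).
  apply: ge_inf.
    by exists 0 => z [z0 _]; exact: ltW.
  split; first exact: ln_gt0.
  exists n, (fun i => (fun x => x + u) @` (S i `&` A)); split.
    move=> i ni _ _ [x [Sx Ax] <-] [y [Sy Ay] <-].
    have hxy := hS i ni x y Sx Sy.
    have [b hb hbB] := th_lt C hC _ _ _ (hAi _ Ax) (hAi _ Ay) B'0 (le_lt_trans hxy hdB).
    have hf := TS_f C hC _ _ _ _ _ c0 (hc _ Ax) (hc _ Ay) hb.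
    apply: (le_trans (th_le _ _ _ _ hf)).
    have b1 : 1 <= b by case: hb.
    have bc : c <= b * c by rewrite ler_peMl //; lra.
    rewrite ler_ln ?posrE.
    - by apply: gam_mono => //; exact: ltW.
    - by rewrite /gam divr_gt0; lra.
    - lra.
  move=> _ [a Aa <-]; have [i ni Si] := hcov a Aa.
  by exists i => //; exists a.
rewrite -[X in _ < X](expRK t) ltr_ln ?posrE ?expR_gt0 -/E; last lra.
rewrite /gam ltr_pdivrMr; last lra.
  rewrite /B' mulrDl hk; lra.
lra.
Qed.
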